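(* For all $n\ge 1$, $f(n)\ge 2n^2+4n+1$.
   Context: For $n\ge 1$, $A_n$ denotes the finite integral symmetric relation algebra with atoms $1'$, $r$, $b_1,\dots,b_n$, all symmetric, in which a diversity cycle $xyz$ is mandatory (i.e. $x;y\ge z$) if and only if it involves $r$, and forbidden (i.e. $x;y\cdot z=0$) otherwise. A representation over a set $U$ is an embedding into the full relation algebra on $U\times U$. $\operatorname{Spec}(A)$ is the set of cardinals $\alpha\le\omega$ such that $A$ has a representation over a set of cardinality $\alpha$, and $f(n)=\min\operatorname{Spec}(A_n)$. *)

(* Defs.v *)
From mathcomp Require Import all_boot.
Set Implicit Arguments. Unset Strict Implicit. Unset Printing Implicit Defensive.

(* Atoms of A_n, encoded as 'I_(n+2):
   0 = the identity atom 1', 1 = r, k+2 = b_(k+1) (k < n).  All atoms are symmetric. *)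
Definition atom (n : nat) := 'I_n.+2.

Definition is_id {n} (a : atom n) : bool := nat_of_ord a == 0.
Definition is_r  {n} (a : atom n) : bool := nat_of_ord a == 1.

(* Composition of two atoms, as a set of atoms (the atoms below x;y).
   - 1' is the identity for composition;
   - for diversity atoms x, y: 1' <= x;y iff y is the converse of x, i.e. y = x
     (all atoms symmetric);
   - for a diversity atom z: z <= x;y iff the diversity cycle xyz is mandatory,
     i.e. iff it involves r; otherwise it is forbidden. *)
Definition comp_atom {n} (x y : atom n) : {set atom n} :=
  if is_id x then [set y]
  else if is_id y then [set x]
  else [set z | if is_id z then x == y else [|| is_r x, is_r y | is_r z]].

(* The algebra A_n: the complex algebra on the atoms, i.e. elements are sets of atoms,
   Boolean operations are set operations, composition is the additive extension of
   comp_atom, converse is the identity (all atoms symmetric), identity element {1'}. *)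
Definition An_elt n := {set atom n}.
Definition An_comp {n} (A B : An_elt n) : An_elt n :=
  \bigcup_(x in A) \bigcup_(y in B) comp_atom x y.
Definition An_conv {n} (A : An_elt n) : An_elt n := A.
Definition An_one n : An_elt n := [set a | is_id a].

(* A representation of A_n over a (finite) set U: an embedding (injective homomorphism
   of relation algebras) of A_n into the full relation algebra Re(U) on U x U. *)
Definition representation {n} (U : finType) (h : An_elt n -> rel U) : Prop :=
  [/\ (forall A B x y, h (A :|: B) x y = h A x y || h B x y),
      (forall A x y, h (~: A) x y = ~~ h A x y),
      (forall A B x y, h (An_comp A B) x y = [exists z, h A x z && h B z y]) &
      [/\ (forall A x y, h (An_conv A) x y = h A y x),
      (forall x y, h (An_one n) x y = (x == y)) &
      (forall A B, (forall x y, h A x y = h B x y) -> A = B)]].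

Definition in_Spec_fin (n m : nat) : Prop :=
  exists (U : finType) (h : An_elt n -> rel U), #|U| = m /\ representation h.

(* Main.v *)
Require Import Defs.
From mathcomp Require Import all_boot.
From mathcomp Require Import zify.
Set Implicit Arguments. Unset Strict Implicit. Unset Printing Implicit Defensive.

Definition rl n (U : finType) (h : An_elt n -> rel U) (x y : U) : atom n :=
  odflt ord0 [pick a : atom n | h [set a] x y].

Lemma hE n (U : finType) (h : An_elt n -> rel U) : representation h ->
  forall A x y, h A x y = (rl h x y \in A).
Proof.
case=> hU hC hM [hV h1 hI].
have hT : forall x y, h setT x y.
  move=> x y; have := hU set0 (~: set0) x y. rewrite hC setUCr => ->.
  by case: (h set0 x y).
have h0 : forall x y, h set0 x y = false.
  by move=> x y; rewrite -setCT hC hT.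
have hI2 : forall A B x y, h (A :&: B) x y = h A x y && h B x y.
  by move=> A B x y; rewrite -[A :&: B]setCK setCI hC hU !hC negb_or !negbK.
have hex : forall k (A : An_elt n) x y, #|A| <= k -> h A x y -> exists2 a, a \in A & h [set a] x y.
  elim=> [|k IH] A x y hk.
    by move: hk; rewrite leqn0 cards_eq0 => /eqP ->; rewrite h0.
  case: (set_0Vmem A) => [->|[a aA]]; first by rewrite h0.
  rewrite -(setD1K aA) hU => /orP [ha|hr]; first by exists a; rewrite ?setU11.
  have hk' : #|A :\ a| <= k by move: hk; rewrite (cardsD1 a A) aA.
  have [b bA hb] := IH _ _ _ hk' hr; exists b => //.
  by rewrite setD1K //; move: bA; rewrite inE => /andP [].
have hdis : forall (a b : atom n) x y, h [set a] x y -> h [set b] x y -> a = b.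
  move=> a b x y ha hb; apply/eqP/negPn/negP => nab.
  have : [set a] :&: [set b] = set0.
    by apply/setP=> z; rewrite !inE; apply/negP => /andP [/eqP -> /eqP]; apply/eqP.
  by move=> e; move: (hI2 [set a] [set b] x y); rewrite e h0 ha hb.
move=> A x y.
have [a _ ha] := hex _ _ x y (leqnn _) (hT x y).
have hp : h [set rl h x y] x y.
  by rewrite /rl; case: pickP => [b hb|/(_ a)] /=; rewrite ?hb ?ha.
apply/idP/idP.
  move=> /(hex _ _ x y (leqnn _)) [b bA hb].
  by rewrite -(hdis _ _ _ _ hb hp).
move=> rA; rewrite -(setUidPr (_ : [set rl h x y] \subset A)) ?sub1set //.
by rewrite hU hp.
Qed.
Lemma compE n (a b c : atom n) : nat_of_ord a != 0 -> nat_of_ord b != 0 ->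
  (c \in comp_atom a b) = if nat_of_ord c == 0 then a == b else [|| nat_of_ord a == 1, nat_of_ord b == 1 | nat_of_ord c == 1].
Proof. by move=> ha hb; rewrite /comp_atom /is_id /is_r (negbTE ha) (negbTE hb) inE. Qed.


Lemma comb n (U : finType) (r : U -> U -> atom n) (x0 : U) :
  1 <= n ->
  (forall x y, (nat_of_ord (r x y) == 0) = (x == y)) ->
  (forall x y, r x y = r y x) ->
  (forall x y a b, (r x y \in comp_atom a b) = [exists z, (r x z == a) && (r z y == b)]) ->
  2 * n ^ 2 + 4 * n + 1 <= #|U|.
Proof.
move=> n1 H0 HC HM.
have mand : forall x y a b, r x y \in comp_atom a b -> exists z, r x z = a /\ r z y = b.
  by move=> x y a b; rewrite HM => /existsP [z /andP [/eqP e1 /eqP e2]]; exists z.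
have forb : forall x y z, r x y \in comp_atom (r x z) (r z y).
  by move=> x y z; rewrite HM; apply/existsP; exists z; rewrite !eqxx.
pose at1 : atom n := inord 1.
pose at2 : atom n := inord 2.
have v1 : nat_of_ord at1 = 1 by rewrite /at1 inordK.
have v2 : nat_of_ord at2 = 2 by rewrite /at2 inordK.
have neigh : forall x (a : atom n), nat_of_ord a != 0 -> exists y, r x y = a.
  move=> x a ha; have : r x x \in comp_atom a a by rewrite compE // H0 !eqxx.
  by move=> /mand [z [e _]]; exists z.
have part : forall (P : {set U}) y, #|P| = \sum_(c < n.+2) #|[set w in P | r y w == c]|.
  move=> P y; rewrite -sum1_card (partition_big (r y) predT) //=.
  by apply: eq_bigr => c _; rewrite -sum1_card; apply: eq_bigl => w; rewrite inE.

have surj : forall x u (c d : atom n), nat_of_ord (r x u) = 1 -> 2 <= c -> nat_of_ord d != 0 ->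
    exists w, r x w = c /\ r w u = d.
  move=> x u c d hu hc hd.
  have : r u x \in comp_atom d c.
    have hc0 : nat_of_ord c != 0 by move: hc; case: (nat_of_ord c).
    by rewrite compE // HC hu eqxx !orbT.
  by move=> /mand [z [e1 e2]]; exists z; rewrite HC e2 HC e1.
have stepD : forall x u (c : atom n) y z, nat_of_ord (r x u) = 1 -> 2 <= c -> r x y = c -> r x z = c ->
    y != z -> r y u = r z u -> n.+2 <= #|[set w | r x w == c]|.
  move=> x u c y z hu hc hy hz yz e.
  have sub : [set~ ord0] \subset [set r w u | w in [set w | r x w == c]].
    apply/subsetP => d; rewrite !inE => hd.
    have [w [e1 e2]] := surj x u c d hu hc hd.
    by apply/imsetP; exists w; rewrite ?inE ?e1.
  have := subset_leq_card sub; rewrite cardsC1 card_ord /= => h1.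
  apply: leq_ltn_trans h1 _; rewrite ltn_neqAle leq_imset_card andbT.
  apply/negP => /imset_injP inj.
  by move: yz; rewrite (inj y z) ?inE ?hy ?hz ?eqxx.

have a10 : nat_of_ord at1 != 0 by rewrite v1.
have a20 : nat_of_ord at2 != 0 by rewrite v2.
have L1 : forall x (c : atom n), 2 <= c -> n.+2 <= #|[set w | r x w == c]|.
  move=> x c hc.
  have hc0 : nat_of_ord c != 0 by move: hc; case: (nat_of_ord c).
  have hc1 : nat_of_ord c != 1 by move: hc; case: (nat_of_ord c) => [|[]].
  have [u hu] := neigh x at1 a10.
  have hu1 : nat_of_ord (r x u) = 1 by rewrite hu v1.
  have [y [hy hyu]] := surj x u c at1 hu1 hc a10.
  have [z [hz hzu]] := surj x u c c hu1 hc hc0.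
  have yz : y != z.
    by apply/eqP => e; move: hc1; rewrite -hzu -e hyu v1.
  have hyz : nat_of_ord (r y z) = 1.
    have := forb y z x; rewrite (HC y x) hy hz compE // H0 (negbTE yz) !(negbTE hc1) /=.
    by move/eqP.
  have [n2|n_1] : 2 <= n \/ n = 1 by lia.
    pose k : atom n := inord (if nat_of_ord c == 2 then 3 else 2).
    have vk : nat_of_ord k = (if nat_of_ord c == 2 then 3 else 2).
      by rewrite /k inordK //; case: ifP => _; lia.
    have k0 : nat_of_ord k != 0 by rewrite vk; case: ifP.
    have k1 : nat_of_ord k != 1 by rewrite vk; case: ifP.
    have kc : nat_of_ord k != nat_of_ord c by rewrite vk; case: ifP => /eqP; lia.
    have ck : (c == k) = false.
      by apply/negbTE; apply: contra kc => /eqP ->.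
    have : r y z \in comp_atom k k by rewrite compE // H0 (negbTE yz) hyz eqxx !orbT.
    move=> /mand [v [hyv hvz]].
    have hxv : nat_of_ord (r x v) = 1.
      have := forb x v y; rewrite hy hyv compE // ck (negbTE hc1) (negbTE k1) /=.
      by case: eqP => //= _ /eqP.
    by apply: (stepD x v c y z hxv hc hy hz yz); rewrite hyv HC hvz.
  have : r y z \in comp_atom at1 at1 by rewrite compE ?v1 // H0 (negbTE yz).
  move=> /mand [v [hyv hvz]].
  have vy : v != y.
    by have := H0 y v; rewrite hyv v1 /= => /esym/negbT; rewrite eq_sym.
  have vz : v != z.
    by have := H0 v z; rewrite hvz v1 /= => /esym/negbT.
  case: (r x v =P c) => [hxvc|hxvc].
    have sub : [set y; z; v] \subset [set w | r x w == c].
      by apply/subsetP => w; rewrite !inE => /orP [/orP [] | ] /eqP ->; rewrite ?hy ?hz ?hxvc eqxx.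
    apply: leq_trans (subset_leq_card sub).
    by rewrite n_1 (cardsD1 y) (cardsD1 z) (cardsD1 v) !inE !eqxx (eq_sym z y) (negbTE yz) (negbTE vy) (negbTE vz).
  have hxv1 : nat_of_ord (r x v) = 1.
    have ne : nat_of_ord (r x v) <> nat_of_ord c by move=> e; apply: hxvc; apply: ord_inj.
    have nx : nat_of_ord (r x v) != 0.
      rewrite H0; apply/eqP => e; move: hc1; by rewrite -hy HC e hyv v1.
    have := ltn_ord (r x v); have := ltn_ord c.
    move: ne nx hc n_1; lia.
  by apply: (stepD x v c y z hxv1 hc hy hz yz); rewrite hyv HC hvz.

have eqT : forall (c : atom n) y, [set w in [set: U] | r y w == c] = [set w | r y w == c].
  by move=> c y; apply/setP => w; rewrite !inE.
have l1 : lift ord0 ord0 = at1 :> atom n by apply: ord_inj; rewrite v1.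
have l2 : forall i : 'I_n, nat_of_ord (lift ord0 (lift ord0 i) : atom n) = i.+2.
  by move=> i; rewrite !lift0.
pose x := x0.
have a2 : nat_of_ord at2 != 0 by rewrite v2.
have [y hy] := neigh x at2 a2.
have hyx : nat_of_ord (r y x) = 2 by rewrite HC hy v2.
pose R := [set w | r x w == at1].
have keyc : forall c : atom n, 2 <= c -> n.+2 <= #|[set w in R | r y w == c]| + (nat_of_ord c == 2).
  move=> c hc.
  have hc0 : nat_of_ord c != 0 by move: hc; case: (nat_of_ord c).
  have hc1 : nat_of_ord c != 1 by move: hc; case: (nat_of_ord c) => [|[]].
  have inR : forall w, r y w = c -> w != x -> w \in [set w in R | r y w == c].
    move=> w hw wx; rewrite !inE hw eqxx andbT.
    have := forb x w y; rewrite hy hw compE // H0 eq_sym (negbTE wx) v2 (negbTE hc1) /=.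
    by move=> /eqP e; apply/eqP; apply: ord_inj; rewrite e v1.
  apply: leq_trans (L1 y c hc) _.
  case: eqP => hc2.
    have sub : [set w | r y w == c] \subset x |: [set w in R | r y w == c].
      apply/subsetP => w; rewrite inE => /eqP hw; rewrite in_setU1.
      by case: (w =P x) => [//|/eqP wx]; rewrite inR.
    apply: leq_trans (subset_leq_card sub) _; rewrite cardsU1 addnC leq_add2l.
    by case: (_ \notin _).
  rewrite addn0; apply: subset_leq_card; apply/subsetP => w; rewrite inE => /eqP hw.
  apply: inR => //; apply/eqP => e; apply: hc2; by rewrite -hw e hyx.
have wit : 0 < #|[set w in R | r y w == lift ord0 ord0]|.
  have : r x y \in comp_atom at1 at1 by rewrite compE // hy v2 v1.
  move=> /mand [w [h1 h2]]; apply/card_gt0P; exists w.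
  by rewrite !inE h1 l1 HC h2 !eqxx.
have sum01 : forall m, \sum_(i < m) (i == 0 :> nat) <= 1.
  case=> [|m]; first by rewrite big_ord0.
  rewrite big_ord_recl /= big1 // => i _; by rewrite lift0.
have hR : n * n.+2 <= #|R|.
  rewrite (part R y) 2!big_ord_recl.
  have : \sum_(i < n) n.+2 <= \sum_(i < n) (#|[set w in R | r y w == lift ord0 (lift ord0 i)]| + (i == 0 :> nat)).
    apply: leq_sum => i _.
    have := keyc (lift ord0 (lift ord0 i)); rewrite l2 eqSS => /(_ isT); by [].
  rewrite big_split /= sum_nat_const card_ord => hs.
  apply: leq_trans hs _; apply: leq_trans (leq_add (leqnn _) (sum01 n)) _.
  rewrite addnC; apply: leq_trans (leq_add wit (leqnn _)) _; exact: leq_addl.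
have hx0 : 0 < #|[set w in [set: U] | r x w == ord0]|.
  by apply/card_gt0P; exists x; rewrite !inE; apply/eqP; apply: ord_inj; apply/eqP; rewrite H0.
rewrite -cardsT (part [set: U] x) 2!big_ord_recl.
have : \sum_(i < n) n.+2 <= \sum_(i < n) #|[set w in [set: U] | r x w == lift ord0 (lift ord0 i)]|.
  apply: leq_sum => i _; rewrite eqT; apply: L1; by rewrite l2.
rewrite sum_nat_const card_ord l1 !eqT -/R => hs.
rewrite eqT in hx0.
move: hs hR hx0; rewrite -mulnn; nia.
Qed.

Theorem mainTheorem8 (n : nat) : 1 <= n ->
  forall m : nat, in_Spec_fin n m -> 2 * n ^ 2 + 4 * n + 1 <= m.
Proof.
move=> n1 m [U [h [<- H]]].
have hE' := hE H.
case: H => hU hC hM [hV h1 hI].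
case: (pickP (@predT U)) => [x0 _|none].
  apply: (comb (r := rl h) x0 n1).
  - by move=> x y; have := h1 x y; rewrite hE' inE.
  - move=> x y; have := hV [set rl h x y] x y.
    by rewrite /An_conv !hE' !inE eqxx => /esym/eqP.
  - move=> x y a b; have := hM [set a] [set b] x y.
    have -> : An_comp [set a] [set b] = comp_atom a b by rewrite /An_comp !big_set1.
    rewrite hE' => ->; apply: eq_existsb => z; by rewrite !hE' !inE.
have e : (set0 : An_elt n) = setT by apply: hI => x; have := none x.
by have := in_setT (ord0 : atom n); rewrite -e inE.
Qed.
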